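(* Let the universe be $\mathbb{Z}$ and let $\mathcal{C}$ be the collection consisting of the languages $\{1,2,\ldots,100\}\cup\mathbb{Z}_{\ge i}$ for all $i\in\mathbb{Z}$, where $\mathbb{Z}_{\ge i}=\{i,i+1,i+2,\ldots\}$. There is no algorithm that non-uniformly generates from $\mathcal{C}$ and whose generation times form a Pareto-optimal sequence.
   Context: Index the languages of $\mathcal{C}$ as $L_1,L_2,\ldots$ by any enumeration without repetition. An enumeration of a language $L$ is a sequence $x_1,x_2,\ldots$ with every $x_t\in L$ and every $x\in L$ equal to some $x_t$. A generating algorithm at each time $t\ge1$ receives $x_1,\ldots,x_t$ and outputs $z_t$; $S_t$ is the set of distinct strings among $x_1,\ldots,x_t$. An algorithm $\mathcal{G}$ non-uniformly generates from $\mathcal{C}$ if for every $i$ there is a finite $t(L_i)$ such that for every enumeration of $L_i$, $z_t\in L_i\setminus S_t$ whenever $|S_t|\ge t(L_i)$; its generation time $t_{\mathcal{G}}(L_i)$ is the least such value ($\infty$ if none). A sequence $t(L_1),t(L_2),\ldots$ is Pareto-optimal if every algorithm $\mathcal{G}$ that non-uniformly generates from $\mathcal{C}$ and satisfies $t_{\mathcal{G}}(L_i)<t(L_i)$ for some $i$ also satisfies $t_{\mathcal{G}}(L_j)>t(L_j)$ for some other $j$. *)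

(* Defs.v *)
From mathcomp Require Import all_boot all_order all_algebra.
From mathcomp Require Import boolp.
Set Implicit Arguments. Unset Strict Implicit. Unset Printing Implicit Defensive.
Import Order.TTheory GRing.Theory Num.Theory.
Local Open Scope ring_scope.

Definition language := int -> Prop.

(* The languages of C : L i = {1,...,100} \cup Z_{>= i}, for i : int.
   (Several indices give the same language.) *)
Definition Lang (i : int) : language :=
  fun z => (1 <= z <= 100) \/ (i <= z).

Definition algorithm := seq int -> int.

(* x : nat -> int, with x k playing the role of x_{k+1}, is an enumeration of L. *)
Definition enumeration (L : language) (x : nat -> int) : Prop :=
  (forall k, L (x k)) /\ (forall z, L z -> exists k, x k = z).

Definition prefix (x : nat -> int) (t : nat) : seq int := [seq x k | k <- iota 0 t].

Definition S_t (x : nat -> int) (t : nat) : seq int := undup (prefix x t).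

Definition generates_after (G : algorithm) (L : language) (n : nat) : Prop :=
  forall x, enumeration L x ->
  forall t : nat, (1 <= t)%N -> (n <= size (S_t x t))%N ->
    L (G (prefix x t)) /\ G (prefix x t) \notin S_t x t.

Definition nonuniform_generates (G : algorithm) : Prop :=
  forall i : int, exists n : nat, generates_after G (Lang i) n.

Lemma ex_asbool (P : nat -> Prop) : (exists n, P n) -> exists n, `[< P n >].
Proof. by case=> n Pn; exists n; apply/asboolP. Qed.

(* generation time t_G(L): least working threshold, None standing for infinity *)
Definition gen_time (G : algorithm) (L : language) : option nat :=
  match pselect (exists n, generates_after G L n) with
  | left h => Some (ex_minn (ex_asbool h))
  | right _ => None
  end.

Definition ext_lt (a b : option nat) : Prop :=
  match a, b with
  | Some m, Some n => (m < n)%N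
  | Some _, None => True
  | None, _ => False
  end.

Definition pareto_optimal (tm : int -> option nat) : Prop :=
  forall G' : algorithm, nonuniform_generates G' ->
  forall i : int, ext_lt (gen_time G' (Lang i)) (tm i) ->
  exists j : int, ~ (forall z, Lang j z <-> Lang i z) /\
    ext_lt (tm j) (gen_time G' (Lang j)).

(* Main.v *)
Require Import Defs.
From mathcomp Require Import all_boot all_order all_algebra.
From mathcomp Require Import boolp.
From mathcomp Require Import zify.
Set Implicit Arguments. Unset Strict Implicit. Unset Printing Implicit Defensive.
Import Order.TTheory GRing.Theory Num.Theory.
Local Open Scope ring_scope.

Definition inr (z : int) : bool := (1 <= z) && (z <= 100).
Definition p0 : seq int := [seq (Posz k) | k <- iota 1 100].
Definition mx (p : seq int) : int := foldr Num.max 0 p.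
Definition pick_small (p : seq int) : int := head 0 [seq z <- p0 | z \notin p].

Definition G' (G : algorithm) (i : int) (p : seq int) : int :=
  if all inr p then
    if (size (undup p) < 100)%N then pick_small p
    else (if (i <= G p) && ~~ inr (G p) then G p else `|i| + 101)
  else mx p + 1.

Lemma mem_p0 z : (z \in p0) = inr z.
Proof.
rewrite /p0 /inr; case: z => n.
  rewrite mem_map; last by move=> a b [].
  rewrite mem_iota; apply/idP/idP; lia.
case: (boolP (Negz n \in _)) => [/mapP[k _ //] | _].
apply/esym/negbTE; apply/negP => h; lia.
Qed.

Lemma size_p0 : size p0 = 100%N.
Proof. by rewrite size_map size_iota. Qed.

Lemma uniq_p0 : uniq p0.
Proof. rewrite map_inj_uniq ?iota_uniq //; by move=> a b []. Qed.

Lemma all_inr_size p : all inr p -> (size (undup p) <= 100)%N.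
Proof.
move=> /allP H; rewrite -size_p0; apply: uniq_leq_size; first exact: undup_uniq.
by move=> z; rewrite mem_undup mem_p0 => /H.
Qed.

Lemma full_cover p : all inr p -> (100 <= size (undup p))%N ->
  forall z, inr z -> z \in p.
Proof.
move=> /allP H Hs z Hz.
have sub : {subset undup p <= p0} by move=> y; rewrite mem_undup mem_p0 => /H.
have sz : (size p0 <= size (undup p))%N by rewrite size_p0.
have [_ E] := uniq_min_size (undup_uniq p) sub sz.
by rewrite -mem_undup E mem_p0.
Qed.

Lemma pick_small_ok p : all inr p -> (size (undup p) < 100)%N ->
  inr (pick_small p) /\ pick_small p \notin p.
Proof.
move=> Ha Hs; rewrite /pick_small.
case E: [seq z <- p0 | z \notin p] => [|a s'] /=.
  have sub : {subset p0 <= undup p}.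
    move=> z zp0; rewrite mem_undup; apply/negPn/negP => zp.
    have : z \in [seq z <- p0 | z \notin p] by rewrite mem_filter zp zp0.
    by rewrite E.
  have := uniq_leq_size uniq_p0 sub; rewrite size_p0; lia.
have : a \in [seq z <- p0 | z \notin p] by rewrite E mem_head.
by rewrite mem_filter mem_p0 => /andP[-> ->].
Qed.

Lemma mx_ge p z : z \in p -> z <= mx p.
Proof.
elim: p => //= a p IH; rewrite in_cons => /orP[/eqP -> | /IH h]; lia.
Qed.

Lemma t1 j (z : int) : inr z -> Lang j z.
Proof. rewrite /inr => h1; left; lia. Qed.
Lemma t2 j (z : int) : ~~ inr z -> Lang j z -> j <= z.
Proof. move=> nz; case=> //; move: nz; rewrite /inr; lia. Qed.
Lemma t3 j (z m : int) : j <= z -> z <= m -> Lang j (m + 1).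
Proof. move=> *; by right; lia. Qed.
Lemma t4 p : (forall z, z \in p -> z <= mx p) -> mx p + 1 \notin p.
Proof. move=> H; apply/negP => /H; lia. Qed.

Lemma safe G i j p : (forall z, z \in p -> Lang j z) ->
  ~~ (all inr p && (100 <= size (undup p))%N) ->
  Lang j (G' G i p) /\ G' G i p \notin p.
Proof.
move=> Hp Hn; rewrite /G'; case: ifP => Ha.
  rewrite Ha /= -ltnNge in Hn; rewrite Hn.
  have [h1 h2] := pick_small_ok Ha Hn; split => //; exact: t1.
case/allPn: (negbT Ha) => z zp nz.
have jz := t2 nz (Hp z zp).
split; first exact: t3 jz (mx_ge zp).
apply: t4 => y; exact: mx_ge.
Qed.

Lemma in_prefix x t z : z \in Defs.prefix x t -> exists k, x k = z.
Proof. by case/mapP => k _ ->; exists k. Qed.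

Lemma gen101 G i j : generates_after (G' G i) (Lang j) 101.
Proof.
move=> x [Hx _] t _ Hs; rewrite /S_t mem_undup in Hs *.
apply: safe.
  by move=> z /in_prefix [k <-].
apply/negP => /andP[/all_inr_size h _]; by move: (leq_trans Hs h).
Qed.

Lemma l0 (i : int) : ~~ inr (`|i| + 101).
Proof. rewrite /inr; move: (normr_ge0 i); move: `|i| => a; lia. Qed.

Lemma full_val G i p : all inr p -> (100 <= size (undup p))%N ->
  G' G i p = (if (i <= G p) && ~~ inr (G p) then G p else `|i| + 101)
  /\ ~~ inr (G' G i p).
Proof.
move=> Ha Hs; rewrite /G' Ha ltnNge Hs /=; split => //.
case: ifP => [/andP[_ ->] //|_]; exact: l0.
Qed.

Lemma gen0 G i j :
  (forall p, all inr p -> (100 <= size (undup p))%N -> Lang j (G' G i p)) ->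
  generates_after (G' G i) (Lang j) 0.
Proof.
move=> H x [Hx _] t _ _; rewrite /S_t mem_undup.
set p := Defs.prefix x t.
case F: (all inr p && (100 <= size (undup p))%N).
  case/andP: F => Ha Hs; split; first exact: H.
  have [_ ni] := full_val G i Ha Hs.
  apply/negP => /(allP Ha); by rewrite (negbTE ni).
by apply: safe; [move=> z /in_prefix [k <-] | rewrite F].
Qed.

Lemma gt_some0 G L : generates_after G L 0 -> gen_time G L = Some 0%N.
Proof.
move=> H; rewrite /gen_time; case: pselect => h; last by exfalso; apply: h; exists 0%N.
congr Some; case: ex_minnP => m _ /(_ 0%N); rewrite asboolT //; lia.
Qed.

Lemma gt_le G L n : generates_after G L n -> exists m, gen_time G L = Some m /\ (m <= n)%N.
Proof.
move=> H; rewrite /gen_time; case: pselect => h; last by exfalso; apply: h; exists n.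
case: ex_minnP => m _ /(_ n); rewrite asboolT // => hm; by exists m; split => //; apply: hm.
Qed.

Lemma gt_some G L m : gen_time G L = Some m -> generates_after G L m.
Proof.
rewrite /gen_time; case: pselect => h //; case=> <-.
by case: ex_minnP => m' /asboolP.
Qed.

Definition en (j : int) (k : nat) : int :=
  if (k < 100)%N then Posz k.+1 else j + Posz (k - 100).

Definition ext (p : seq int) (j : int) (k : nat) : int :=
  if (k < size p)%N then nth 0 p k else en j (k - size p).

Lemma ext_enum p j : all inr p -> enumeration (Lang j) (ext p j).
Proof.
move=> Ha; split.
  move=> k; rewrite /ext; case: ifP => hk.
    left; exact: (allP Ha _ (mem_nth 0 hk)).
  rewrite /en; case: ifP => hk2; [left | right]; lia.
move=> z Hz.
case Iz: (inr z).
  have [n zn] : exists n : nat, z = Posz n.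
    by case: z Iz {Hz} => n; [exists n | rewrite /inr; lia].
  exists (size p + (n - 1))%N; rewrite /ext /en /inr zn in Iz *.
  rewrite ifF; last lia.
  rewrite ifT; last lia.
  congr Posz; lia.
have jz : j <= z by case: Hz => //; move: Iz; rewrite /inr; lia.
exists (size p + 100 + `|z - j|%N)%N; rewrite /ext /en.
rewrite ifF; last lia.
rewrite ifF; last lia.
have e : Posz `|z - j|%N = z - j by rewrite gez0_abs // subr_ge0.
lia.
Qed.

Lemma ext_prefix p j : Defs.prefix (ext p j) (size p) = p.
Proof.
rewrite /Defs.prefix -[RHS](mkseq_nth 0 p) /mkseq; apply/eq_in_map => k.
by rewrite mem_iota add0n => /andP[_ h]; rewrite /ext h.
Qed.

Lemma size_undup_p0 : size (undup p0) = 100%N.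
Proof. by rewrite undup_id ?uniq_p0 // size_p0. Qed.

Lemma all_inr_p0 : all inr p0.
Proof. by apply/allP => z; rewrite mem_p0. Qed.

Lemma l1 i : Lang i (`|i| + 101).
Proof. right; move: (ler_norm i); move: `|i| => a; lia. Qed.

Lemma l2 (g : int) : ~ (`|g| + 1 <= g).
Proof. move: (ler_norm g); move: `|g| => a; lia. Qed.

Lemma l3 (i j z : int) : j <= z -> z < i -> Lang j (`|i| + 101).
Proof. move=> h1 h2; right; move: (ler_norm i); move: `|i| => a; lia. Qed.

Lemma l4 (k m s : nat) : (k < m)%N -> (m <= 101)%N -> (100 <= s)%N -> (k <= s)%N.
Proof. lia. Qed.

Lemma ok_i G i : generates_after (G' G i) (Lang i) 0.
Proof.
apply: gen0 => p Ha Hs; have [-> _] := full_val G i Ha Hs.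
case: ifP => [/andP[h _]|_]; [by right | exact: l1].
Qed.

Lemma X1 G j : Lang j (G (Defs.prefix (ext p0 j) (size p0))) -> Lang j (G p0).
Proof. by rewrite ext_prefix. Qed.
Lemma X2 G j : G (Defs.prefix (ext p0 j) (size p0)) \notin S_t (ext p0 j) (size p0) -> ~~ inr (G p0).
Proof. by rewrite /S_t mem_undup ext_prefix mem_p0. Qed.
Lemma X3 : (1 <= size p0)%N.
Proof. by rewrite size_p0. Qed.
Lemma X4 G j : generates_after G (Lang j) 0 -> Lang j (G (Defs.prefix (ext p0 j) (size p0))).
Proof. move=> H. have [Hl Hn] := H _ (ext_enum j all_inr_p0) (size p0) X3 (leq0n _). exact: Hl. Qed.

Lemma X5 G j : generates_after G (Lang j) 0 ->
  G (Defs.prefix (ext p0 j) (size p0)) \notin S_t (ext p0 j) (size p0).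
Proof. move=> H. have [Hl Hn] := H _ (ext_enum j all_inr_p0) (size p0) X3 (leq0n _). exact: Hn. Qed.

Lemma gen0_p0 G j : generates_after G (Lang j) 0 -> Lang j (G p0) /\ ~~ inr (G p0).
Proof. move=> H; split; [exact: X1 (X4 H) | exact: X2 (X5 H)]. Qed.

Lemma partA G : ext_lt (gen_time (G' G (`|G p0| + 1)) (Lang (`|G p0| + 1)))
                        (gen_time G (Lang (`|G p0| + 1))).
Proof.
rewrite (gt_some0 (@ok_i G _)) /=.
case E: (gen_time G (Lang _)) => [k|] //.
case: k E => [/gt_some H|k _] //.
have [Hl Hn] := gen0_p0 H.
case: Hl => [h|h]; first by move: Hn; rewrite /inr h.
by case: (l2 h).
Qed.

Lemma partB G i j : ~ ext_lt (gen_time G (Lang j)) (gen_time (G' G i) (Lang j)).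
Proof.
case: (pselect (forall p, all inr p -> (100 <= size (undup p))%N -> Lang j (G' G i p))) => [H|].
  by rewrite (gt_some0 (gen0 H)); case: (gen_time G (Lang j)).
move=> /existsNP [p /existsNP [Ha /existsNP [Hs Hnot]]].
have [m [-> hm]] := gt_le (@gen101 G i j).
case E: (gen_time G (Lang j)) => [k|] //= hk.
have Hgen := gt_some E.
have hp : (1 <= size p)%N by apply: leq_trans (leq_trans _ Hs) (size_undup p).
have hs : (k <= size (S_t (ext p j) (size p)))%N.
  rewrite /S_t ext_prefix; exact: l4 hk hm Hs.
have [Hl Hn] := Hgen _ (ext_enum j Ha) (size p) hp hs.
rewrite ext_prefix in Hl; rewrite /S_t mem_undup ext_prefix in Hn.
have ni : ~~ inr (G p) by apply: contra Hn => h; exact: (full_cover Ha Hs h).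
apply: Hnot; have [-> _] := full_val G i Ha Hs.
case: ifP => [_ //|]; rewrite ni andbT => /negbT; rewrite -ltNge => gi'.
exact: l3 (t2 ni Hl) gi'.
Qed.

Theorem mainTheorem5 :
  ~ (exists G : algorithm,
       nonuniform_generates G /\ pareto_optimal (fun i => gen_time G (Lang i))).
Proof.
case=> G [HG Hpar].
have nu : nonuniform_generates (G' G (`|G p0| + 1)).
  by move=> j; exists 101%N; apply: gen101.
have [j [_ Hj]] := Hpar _ nu _ (partA G).
exact: partB Hj.
Qed.
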